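(* For all natural numbers $P, N, m \geq 1$ and every real number $x \geq 1$, one has $$\Big|\sum_{n \leq x:\, (n,P)=1} \frac{\mu(n)}{n}\Big| \leq 1, \qquad \Big|\sum_{n \mid N:\, n \leq x} \frac{\mu(n)}{n}\Big| \leq 1, \qquad \Big|\sum_{n \leq x} \frac{\mu(mn)}{n}\Big| \leq 1,$$ where $n$ ranges over natural numbers.
   Context: $\mu$ denotes the Möbius function: $\mu(n) = (-1)^k$ if $n$ is a product of $k$ distinct primes, and $\mu(n)=0$ otherwise. $(n,P)$ denotes the greatest common divisor of $n$ and $P$. *)

(* Defs.v *)
From mathcomp Require Import all_boot all_order all_algebra.
From mathcomp Require Import reals.
Set Implicit Arguments. Unset Strict Implicit. Unset Printing Implicit Defensive.

(* Moebius function: mu 0 = 0 (convention, never used at 0 in the theorem),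
   mu n = (-1)^k if n >= 1 is a product of k distinct primes, 0 otherwise. *)
Definition squarefree (n : nat) : bool := all (fun p => logn p n == 1%N) (primes n).

Definition mobius (n : nat) : int :=
  if (n == 0)%N then 0%R
  else if squarefree n then ((-1) ^+ size (primes n))%R else 0%R.

(* Main.v *)
Require Import Defs.
From mathcomp Require Import all_boot all_order all_algebra.
From mathcomp Require Import reals.
From mathcomp Require Import ring lra zify.
Import Order.TTheory GRing.Theory Num.Theory.

Lemma mobius1 : mobius 1 = 1%R.
Proof. by []. Qed.

Lemma primes_pM p e : prime p -> (0 < e)%N -> ~~ (p %| e) ->
  perm_eq (primes (p * e)) (p :: primes e).
Proof.
move=> pp e0 npe; apply: uniq_perm.
- exact: primes_uniq.
- by rewrite /= primes_uniq andbT mem_primes pp e0.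
- move=> q; rewrite primesM ?(prime_gt0 pp) //.
  by rewrite (primes_prime pp) !inE.
Qed.

Lemma mobius_pM p e : prime p -> (0 < e)%N -> ~~ (p %| e) ->
  mobius (p * e) = (- mobius e)%R.
Proof.
move=> pp e0 npe.
have pe0 : (p * e == 0)%N = false by rewrite gtn_eqF // muln_gt0 prime_gt0.
have H := @primes_pM p e pp e0 npe.
rewrite /mobius pe0 gtn_eqF //.
have -> : squarefree (p * e) = squarefree e.
  rewrite /squarefree (perm_all _ H) /= lognM ?(prime_gt0 pp) // (logn_prime _ pp) eqxx.
  have -> : logn p e = 0%N by apply/eqP; rewrite -leqn0 leqNgt logn_gt0 mem_primes pp e0.
  rewrite /=; apply: eq_in_all => q; rewrite mem_primes => /and3P[qp _ qe].
  rewrite lognM ?(prime_gt0 pp) // (logn_prime _ pp).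
  by case: (eqVneq q p) => [qp'|//]; move: npe; rewrite -qp' qe.
case: (squarefree e); last by rewrite oppr0.
by rewrite (perm_size H) /= exprS mulN1r.
Qed.

Lemma mobius_pdvd p e : prime p -> (0 < e)%N -> (p %| e) -> mobius (p * e) = 0%R.
Proof.
move=> pp e0 pe.
rewrite /mobius gtn_eqF ?muln_gt0 ?(prime_gt0 pp) ?e0 // /squarefree.
have -> : all (fun q => logn q (p * e) == 1) (primes (p * e)) = false.
  apply/negbTE/allPn; exists p.
    by rewrite mem_primes pp muln_gt0 prime_gt0 // e0 dvdn_mulr.
  rewrite (lognM _ (prime_gt0 pp) e0) (logn_prime _ pp) eqxx.
  by rewrite -[1%N]addn0 eqn_add2l -lt0n logn_gt0 mem_primes pp e0.
by [].
Qed.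

Lemma mobius_sum k : (0 < k)%N -> (\sum_(d <- divisors k) mobius d = (k == 1%N)%:R)%R.
Proof.
move=> k0; case: (ltngtP k 1) => [|k1|->]; first by rewrite ltnNge k0.
  2: by rewrite big_cons big_nil mobius1.
have pp := pdiv_prime k1; set p := pdiv k in pp *.
have [k' kE] : exists k', k = p * k'.
  by have /dvdnP[q qE] := pdiv_dvd k; exists q; rewrite mulnC.
have k'0 : (0 < k')%N by move: k0; rewrite kE muln_gt0 => /andP[].
rewrite (bigID (fun d => p %| d)) /=.
have E1 : (\sum_(d <- divisors k | (p %| d)%N) mobius d = \sum_(e <- divisors k') mobius (p * e)%N)%R.
  rewrite -big_filter -(big_map (muln p) predT); apply: perm_big; apply: uniq_perm.
  - exact/filter_uniq/divisors_uniq.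
  - by rewrite map_inj_uniq ?divisors_uniq //; by move=> a b /eqP; rewrite eqn_pmul2l ?(prime_gt0 pp) // => /eqP.
  move=> d; rewrite mem_filter -dvdn_divisors //; apply/andP/mapP.
    case=> /dvdnP[e ->] ek; exists e; last by rewrite mulnC.
    by rewrite -dvdn_divisors // -(@dvdn_pmul2l p) ?prime_gt0 // -kE mulnC.
  case=> e; rewrite -dvdn_divisors // => ek ->; split; first exact: dvdn_mulr.
  by rewrite kE dvdn_pmul2l // prime_gt0.
have E2 : (\sum_(e <- divisors k') mobius (p * e)%N = - \sum_(e <- divisors k' | ~~ (p %| e)%N) mobius e)%R.
  rewrite -sumrN [RHS]big_mkcond /=.
apply: eq_big_seq => e ek.
  rewrite -dvdn_divisors // in ek.
  have e0 := dvdn_gt0 k'0 ek.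
  by case: (boolP (p %| e)) => pe; [rewrite mobius_pdvd | rewrite mobius_pM].
have E3 : (\sum_(e <- divisors k' | ~~ (p %| e)%N) mobius e = \sum_(d <- divisors k | ~~ (p %| d)%N) mobius d)%R.
  rewrite -[LHS]big_filter -[RHS]big_filter; apply: perm_big; apply: uniq_perm.
  - exact/filter_uniq/divisors_uniq.
  - exact/filter_uniq/divisors_uniq.
  move=> d; rewrite !mem_filter -!dvdn_divisors //; case: (boolP (p %| d)) => //= pd.
  by rewrite kE Gauss_dvdr // coprime_sym prime_coprime.
by rewrite E1 E2 E3 addNr.
Qed.

Lemma sum_range_divisors k (F : nat -> int) : (0 < k)%N ->
  (\sum_(1 <= d < k.+1 | (d %| k)%N) F d = \sum_(d <- divisors k) F d)%R.
Proof.
move=> k0; rewrite -big_filter; apply: perm_big; apply: uniq_perm.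
- exact/filter_uniq/iota_uniq.
- exact: divisors_uniq.
move=> d; rewrite mem_filter mem_index_iota -dvdn_divisors //.
apply/andP/idP => [[]//|dk]; split=> //.
by rewrite (dvdn_gt0 k0 dk) ltnS dvdn_leq.
Qed.

Lemma sum_filter_mobius k g (Q : pred nat) : (0 < k)%N -> (0 < g)%N ->
  (forall d, (d %| k) && Q d = (d %| g)) ->
  (\sum_(1 <= d < k.+1 | (d %| k)%N) (if Q d then mobius d else 0) = (g == 1%N)%:R)%R.
Proof.
move=> k0 g0 HQ; rewrite sum_range_divisors // -big_mkcond /= -mobius_sum // -[LHS]big_filter -[RHS]big_filter.
apply: perm_big; apply: uniq_perm; [exact/filter_uniq/divisors_uniq | exact/filter_uniq/divisors_uniq|].
by move=> d; rewrite !mem_filter -!dvdn_divisors // andbC.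
Qed.

Lemma mobiusM m n : (0 < m)%N -> (0 < n)%N ->
  mobius (m * n) = (mobius m * (if coprime n m then mobius n else 0))%R.
Proof.
elim: m {-2}m (leqnn m) n => [|M IH] m; first by rewrite leqn0 => /eqP ->.
move=> mM n m0 n0.
case: (ltngtP m 1) => [|m1|->]; first by rewrite ltnNge m0.
  2: by rewrite mul1n mobius1 mul1r coprimen1.
have pp := pdiv_prime m1; set p := pdiv m in pp *.
have [m' mE] : exists m', m = p * m'.
  by have /dvdnP[q qE] := pdiv_dvd m; exists q; rewrite mulnC.
have m'0 : (0 < m')%N by move: m0; rewrite mE muln_gt0 => /andP[].
have m'lt : (m' <= M)%N.
  by rewrite -ltnS (leq_trans _ mM) // mE ltn_Pmull // prime_gt1.
rewrite mE -mulnA.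
case: (boolP (p %| m')) => pm'.
  rewrite (@mobius_pdvd p m' pp m'0 pm') mul0r mobius_pdvd ?muln_gt0 ?m'0 ?n0 //.
  exact: dvdn_mulr.
rewrite (@mobius_pM p m' pp m'0 pm').
case: (boolP (p %| n)) => pn.
  rewrite mobius_pdvd ?muln_gt0 ?m'0 ?n0 ?dvdn_mull //.
  have -> : coprime n (p * m') = false.
    by apply/negbTE; rewrite coprimeMr negb_and coprime_sym prime_coprime // pn.
  by rewrite mulr0.
rewrite mobius_pM ?muln_gt0 ?m'0 ?n0 //; last by rewrite Euclid_dvdM // negb_or pm'.
by rewrite IH // coprimeMr (coprime_sym n p) (prime_coprime _ pp) pn /= mulNr.
Qed.

Lemma part_dvd P n d : (0 < P)%N -> (0 < n)%N ->
  (d %| n) && coprime d P = (d %| n`_(\pi(P))^').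
Proof.
move=> P0 n0; have g0 : (0 < n`_(\pi(P))^')%N by rewrite part_gt0.
case: (posnP d) => [->|d0].
  by rewrite !dvd0n gtn_eqF // gtn_eqF.
rewrite coprime_sym (coprime_pi' P0 d0).
apply/andP/idP => [[dn pd]|dg].
  by rewrite -(part_pnat_id pd) partn_dvd.
split; first exact: dvdn_trans dg (dvdn_part _ _).
exact: pnat_dvd dg (part_pnat _ _).
Qed.


Local Open Scope ring_scope.

Lemma count_mult K d : (0 < d)%N ->
  \sum_(1 <= n < K.+1 | (d %| n)%N) (1 : int) = (K %/ d)%:R.
Proof.
move=> d0; elim: K => [|K IH]; first by rewrite big_geq // div0n.
rewrite big_mkcond big_nat_recr //= -big_mkcond IH divnS // natrD addrC.
by case: (d %| K.+1)%N.
Qed.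

Lemma exch K (a : nat -> int) :
  \sum_(1 <= d < K.+1) a d * (K %/ d)%:R =
  \sum_(1 <= n < K.+1) \sum_(1 <= d < n.+1 | (d %| n)%N) a d.
Proof.
have E : forall d, (1 <= d < K.+1)%N ->
    a d * (K %/ d)%:R = \sum_(1 <= n < K.+1) (if (d %| n)%N then a d else 0).
  move=> d /andP[d0 _]; rewrite -big_mkcond /= -count_mult // mulr_sumr.
  by apply: eq_bigr => *; rewrite mulr1.
rewrite (eq_big_nat _ _ E) exchange_big_nat /=; apply: eq_big_nat => n /andP[n0 nK].
rewrite -big_mkcond (big_cat_nat _ (n:=n.+1)) //= [X in _ + X = _]big1_seq ?addr0 // => d /andP[dn].
rewrite mem_index_iota => /andP[nd _].
by move: (dvdn_leq n0 dn); rewrite leqNgt nd.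
Qed.

Lemma key (R : realType) (x : R) (a : nat -> int) :
  1 <= x ->
  (forall d, `|a d| <= 1) ->
  (forall n, (0 < n)%N -> 0 <= \sum_(1 <= d < n.+1 | (d %| n)%N) a d) ->
  (forall n, (1 < n)%N -> a n != 0 -> \sum_(1 <= d < n.+1 | (d %| n)%N) a d <= 0) ->
  (forall n, (0 < n)%N -> \sum_(1 <= d < n.+1 | (d %| n)%N) a d <= 1) ->
  `| \sum_(1 <= n < (Num.truncn x).+1) ((a n)%:~R / n%:R : R) | <= 1.
Proof.
move=> x1 ha hs0 hs1 hs2.
set K := Num.truncn x.
have x0 : 0 < x by apply: lt_le_trans x1.
have K1 : (0 < K)%N by rewrite truncn_gt0.
have /andP[Kx xK] := truncn_itv (ltW x0).
set s := fun n => \sum_(1 <= d < n.+1 | (d %| n)%N) a d.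
set r := fun d : nat => x / d%:R - (K %/ d)%:R.
have r01 : forall d, (0 < d)%N -> 0 <= r d <= 1.
  move=> d d0; have dR : 0 < d%:R :> R by rewrite ltr0n.
  have h1 : (K %/ d)%:R <= x / d%:R.
    by rewrite ler_pdivlMr // -natrM (le_trans _ Kx) // ler_nat leq_divM.
  have h2 : x / d%:R <= (K %/ d)%:R + 1.
    rewrite ler_pdivrMr // (le_trans (ltW xK)) // natr1 -natrM ler_nat.
    exact: ltn_ceil.
  rewrite /r; apply/andP; split; lra.
set T := \sum_(1 <= n < K.+1) ((a n)%:~R / n%:R : R).
have Hx : x * T = (\sum_(1 <= n < K.+1) s n)%:~R + \sum_(1 <= d < K.+1) (a d)%:~R * r d.
  have E : forall d, (1 <= d < K.+1)%N ->
      x * ((a d)%:~R / d%:R) = (a d * (K %/ d)%:R)%:~R + (a d)%:~R * r d.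
    move=> d /andP[d0 _]; have dR : d%:R != 0 :> R by rewrite pnatr_eq0 -lt0n.
    rewrite intrM rmorph_nat /r; field.
    exact: dR.
  rewrite /T mulr_sumr (eq_big_nat _ _ E) big_split /= -rmorph_sum.
  by rewrite exch.
have i1 : (1 : int)%:~R = 1 :> R by [].
have i0 : (0 : int)%:~R = 0 :> R by [].
have iK : ((K.-1)%:R : int)%:~R = (K.-1)%:R :> R by rewrite rmorph_nat.
have aR : forall d, `|(a d)%:~R : R| <= 1.
  by move=> d; rewrite -intr_norm -i1 ler_int.
have sS : \sum_(1 <= n < K.+1) s n = s 1%N + \sum_(2 <= n < K.+1) s n by rewrite big_ltn.
set S2 := \sum_(2 <= n < K.+1) s n.
set B2 := \sum_(2 <= n < K.+1) ((a n != 0)%:R : int).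
have s1 : s 1%N <= 1 := hs2 1%N isT.
have S2ge : 0 <= S2.
  rewrite /S2 big_nat_cond; apply: sumr_ge0 => n /andP[/andP[n2 _] _].
  exact: hs0 (ltnW n2).
have SB : S2 + B2 <= (K.-1)%:R.
  rewrite /S2 /B2 -big_split /=.
  have -> : ((K.-1)%:R : int) = \sum_(2 <= n < K.+1) 1 by rewrite sumr_const_nat subSS subn1.
  apply: ler_sum_nat => n /andP[n2 _].
  case: (eqVneq (a n) 0) => an /=.
    by rewrite ?mulr0n addr0; apply: hs2 (ltnW n2).
  by rewrite ?mulr1n /s; have := hs1 n n2 an; lra.
have E2b : `| \sum_(2 <= d < K.+1) (a d)%:~R * r d | <= B2%:~R.
  rewrite rmorph_sum (le_trans (ler_norm_sum _ _ _)) //; apply: ler_sum_nat => d /andP[d2 _].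
  case: (eqVneq (a d) 0) => ad /=.
    by rewrite ad mul0r normr0 ?mulr0n.
  have /andP[r0 r1] := r01 d (ltnW d2).
  rewrite ?mulr1n i1 normrM (ger0_norm r0) -[X in _ <= X]mulr1.
  by apply: ler_pM => //; apply: aR.
have E1b : `|(a 1%N)%:~R * r 1%N| <= x - K%:R.
  have -> : r 1%N = x - K%:R by rewrite /r divr1 divn1.
  have /andP[r0 r1] := r01 1%N isT.
  rewrite /r divr1 divn1 in r0 r1 *.
  rewrite normrM (ger0_norm r0) -[X in _ <= X]mul1r.
  by apply: ler_pM => //; apply: aR.
have Ksp : (K.-1)%:R = K%:R - 1 :> R.
  by rewrite -[in RHS](prednK K1) -natr1 addrK.
have s1R : (s 1%N)%:~R <= 1 :> R by rewrite -i1 ler_int.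
have s1R0 : 0 <= (s 1%N)%:~R :> R by rewrite -i0 ler_int; apply: hs0.
have S2R : 0 <= S2%:~R :> R by rewrite -i0 ler_int.
have SBR : S2%:~R + B2%:~R <= (K.-1)%:R :> R.
  by rewrite -intrD -iK ler_int.
have B2R : 0 <= B2%:~R :> R.
  rewrite -i0 ler_int /B2; apply: sumr_ge0 => n _.
  by case: (a n != 0).
have Hx2 : x * T = (s 1%N)%:~R + S2%:~R + ((a 1%N)%:~R * r 1%N + \sum_(2 <= d < K.+1) (a d)%:~R * r d).
  by rewrite Hx sS intrD; congr (_ + _); rewrite big_ltn ?ltnS.
move: E1b E2b => /ler_normlP[E1l E1u] /ler_normlP[E2l E2u].
have [l u] : -x <= x * T /\ x * T <= x by split; lra.
rewrite ler_norml; apply/andP; split; rewrite -(ler_pM2l x0) ?mulrN1 ?mulr1 //.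
Qed.



Lemma mobius_abs n : `|mobius n| <= 1.
Proof.
rewrite /mobius; case: (n == 0)%N => //; case: (squarefree n) => //.
by rewrite normrX normrN normr1 expr1n.
Qed.


Lemma part1 (R : realType) (x : R) (P : nat) : (1 <= P)%N -> 1 <= x ->
  `| \sum_(1 <= n < (Num.truncn x).+1)
       ((if coprime n P then mobius n else 0)%:~R / n%:R : R) | <= 1.
Proof.
move=> P0 x1.
have H n : (0 < n)%N -> \sum_(1 <= d < n.+1 | (d %| n)%N) (if coprime d P then mobius d else 0)
    = ((n`_(\pi(P))^')%N == 1%N)%:R.
  move=> n0; exact: (@sum_filter_mobius n (n`_(\pi(P))^')%N (coprime ^~ P) n0 (part_gt0 _ _)
    (fun d => @part_dvd P n d P0 n0)).
apply: key => //.
- by move=> d; case: (coprime d P) => //; apply: mobius_abs.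
- by move=> n n0; rewrite H //; case: eqP.
- move=> n n1; case: ifP => // cnP _.
  have n0 : (0 < n)%N := ltnW n1.
  have pn : (\pi(P))^'.-nat n by rewrite -coprime_pi' // coprime_sym.
  by rewrite H // (part_pnat_id pn) (gtn_eqF n1).
- by move=> n n0; rewrite H //; case: eqP.
Qed.

Lemma part2 (R : realType) (x : R) (N : nat) : (1 <= N)%N -> 1 <= x ->
  `| \sum_(1 <= n < (Num.truncn x).+1)
       ((if (n %| N)%N then mobius n else 0)%:~R / n%:R : R) | <= 1.
Proof.
move=> N0 x1.
have H n : (0 < n)%N -> \sum_(1 <= d < n.+1 | (d %| n)%N) (if (d %| N)%N then mobius d else 0)
    = (gcdn n N == 1%N)%:R.
  move=> n0; apply: (@sum_filter_mobius n (gcdn n N) (fun d => d %| N)%N n0).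
    by rewrite gcdn_gt0 n0.
  by move=> d; rewrite dvdn_gcd.
apply: key => //.
- by move=> d; case: (d %| N)%N => //; apply: mobius_abs.
- by move=> n n0; rewrite H //; case: eqP.
- move=> n n1; case: ifP => // nN _.
  have n0 : (0 < n)%N := ltnW n1.
  by rewrite H // (gcdn_idPl nN) (gtn_eqF n1).
- by move=> n n0; rewrite H //; case: eqP.
Qed.

Lemma conv (R : realType) (x : R) (Q : pred nat) (f : nat -> int) : 0 <= x ->
  \sum_(1 <= n < (Num.truncn x).+1 | (n%:R <= x) && Q n) ((f n)%:~R / n%:R : R) =
  \sum_(1 <= n < (Num.truncn x).+1) ((if Q n then f n else 0)%:~R / n%:R).
Proof.
move=> x0; rewrite big_mkcond; apply: eq_big_nat => n /andP[_ nK].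
have -> : (n%:R <= x) = true by rewrite -truncn_ge_nat // -ltnS.
case: (Q n) => //=.
by rewrite (_ : (0 : int)%:~R = 0 :> R) // mul0r.
Qed.

Theorem mainTheorem2 (R : realType) (P N m : nat) (x : R) :
  (1 <= P)%N -> (1 <= N)%N -> (1 <= m)%N -> 1 <= x ->
  [/\ `| \sum_(1 <= n < (Num.truncn x).+1 | (n%:R <= x) && coprime n P)
          ((mobius n)%:~R / n%:R : R) | <= 1,
      `| \sum_(1 <= n < (Num.truncn x).+1 | (n%:R <= x) && (n %| N)%N)
          ((mobius n)%:~R / n%:R : R) | <= 1
    & `| \sum_(1 <= n < (Num.truncn x).+1 | n%:R <= x)
          ((mobius (m * n))%:~R / n%:R : R) | <= 1 ].
Proof.
move=> P0 N0 m0 x1; have x0 : 0 <= x by apply: le_trans x1.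
split.
- by rewrite (@conv R x (coprime ^~ P) mobius x0); apply: part1.
- by rewrite (@conv R x (fun n => n %| N)%N mobius x0); apply: part2.
have -> : \sum_(1 <= n < (Num.truncn x).+1 | n%:R <= x) ((mobius (m * n))%:~R / n%:R : R) =
    (mobius m)%:~R * \sum_(1 <= n < (Num.truncn x).+1)
       ((if coprime n m then mobius n else 0)%:~R / n%:R : R).
  rewrite mulr_sumr big_mkcond; apply: eq_big_nat => n /andP[n0 nK].
  have -> : (n%:R <= x) = true by rewrite -truncn_ge_nat // -ltnS.
  by rewrite mobiusM // intrM mulrA.
rewrite normrM -[X in _ <= X]mulr1; apply: ler_pM => //.
  by rewrite -intr_norm (_ : 1 = (1 : int)%:~R :> R) // ler_int mobius_abs.
exact: part1.
Qed.
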